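(* Let $k,d\in\mathbb{N}$, $\mathbf{l}\in\mathbb{N}^{d^2}$ and $\mathbf{i}\in I_{\mathbf{l}}$. Define $\Phi_{\mathbf{l},\mathbf{i}}:[0,1]^{d\times d}\to[0,1]^{d\times d}$ by $[\Phi_{\mathbf{l},\mathbf{i}}(X)]_{m,n}=\phi_{l_j,i_j}([X]_{m,n})$ with $j=(m-1)d+n$, for $m,n\in\{1,\dots,d\}$. Then $\Phi_{\mathbf{l},\mathbf{i}}\in \mathcal{C}^{W,L}_{2k+1}(\mathbb{R}^{d\times d},\mathbb{R}^{d\times d})$ (i.e. coincides on $[0,1]^{d\times d}$ with a member of this class) with $W=2d^2$ and $L=\lfloor\frac{5}{2}d\rfloor+3$.
   Context: Hat functions: $\phi(x)=1-|x|$ for $x\in[-1,1]$, $0$ otherwise; for $l\in\mathbb N$, $h_l=2^{-l}$, $x_{l,i}=ih_l$, $\phi_{l,i}(x)=\phi((x-x_{l,i})/h_l)$. For $\mathbf l\in\mathbb N^{d^2}$, $I_{\mathbf l}=\{\mathbf i\in\mathbb N^{d^2}:1\le i_j\le 2^{l_j}-1,\ i_j\text{ odd for all }j\}$. CNN notation: ReLU $\sigma(x)=\max\{x,0\}$ entrywise; $\mathbb R^{d\times d}\cong\mathbb R^{1\times d\times d}$; for $X\in\mathbb R^{c\times d\times d}$, zero padding $[\iota(X)]_{q,m,n}=[X]_{q,m,n}$ if $m,n\in\{1,\dots,d\}$, else $0$; for $K\in\mathbb R^{c'\times c\times(2k+1)\times(2k+1)}$ (indices $s,t\in\{-k,\dots,k\}$),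 $[K*X]_{p,m,n}=\sum_q\sum_{s,t=-k}^k[K]_{p,q,s,t}[\iota(X)]_{q,m+s,n+t}$; $A_{K,\mathbf b}(X)=K*X+\mathbf b\mathbf 1_{d\times d}$, $[\mathbf b\mathbf 1_{d\times d}]_{p,m,n}=b_p$. An $L$-layer ReLU CNN with channels $c_0,\dots,c_L$ and kernel spatial size $2k+1$ is $\sigma\circ A_{K^L,\mathbf b^L}\circ\cdots\circ\sigma\circ A_{K^1,\mathbf b^1}$, $K^l\in\mathbb R^{c_l\times c_{l-1}\times(2k+1)\times(2k+1)}$, $\mathbf b^l\in\mathbb R^{c_l}$; width $\max\{c_1,\dots,c_L\}$, depth $L$. $\mathcal C^{W,L}_{2k+1}(\mathbb R^{c_0\times d\times d},\mathbb R^{c_L\times d\times d})$ is the set of such maps of width $W$ and depth $L$. *)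

(* Defs.v *)
From HB Require Import structures.
From mathcomp Require Import all_boot all_order all_algebra.
From mathcomp Require Import reals.
Set Implicit Arguments. Unset Strict Implicit. Unset Printing Implicit Defensive.
Import Order.TTheory GRing.Theory Num.Theory.
Local Open Scope ring_scope.

Section Defs.
Variable R : realType.

Definition hat (x : R) : R := if `|x| <= 1 then 1 - `|x| else 0.
Definition hstep (l : nat) : R := (2%:R : R) ^- l.
Definition hat_li (l i : nat) (x : R) : R := hat ((x - i%:R * hstep l) / hstep l).

Definition in_Il (d : nat) (l i : 'I_(d * d) -> nat) : Prop :=
  forall j, ((1 <= i j)%N && (i j <= 2 ^ l j - 1)%N) && odd (i j).

(* Phi_{l,i}(X)_{m,n} = phi_{l_j,i_j}(X_{m,n}), j = (m-1)d+n (1-based);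
   with 0-based indices j = m*d + n = mxvec_index m n. *)
Definition Phi (d : nat) (l i : 'I_(d * d) -> nat) (X : 'M[R]_d) : 'M[R]_d :=
  \matrix_(m < d, n < d) hat_li (l (mxvec_index m n)) (i (mxvec_index m n)) (X m n).

Definition tensor (c d : nat) := 'I_c -> 'I_d -> 'I_d -> R.

Definition relu (x : R) : R := Num.max x 0.

(* kernel spatial index s : 'I_(2k+1) stands for s - k in {-k..k};
   shifted index m + (s - k), None if outside {0..d-1} (zero padding). *)
Definition shift_idx (d k : nat) (m : 'I_d) (s : 'I_(2 * k + 1)) : option 'I_d :=
  if (k <= m + s)%N then insub (m + s - k)%N else None.

Definition padval (c d k : nat) (X : tensor c d) (q : 'I_c)
    (m n : 'I_d) (s t : 'I_(2 * k + 1)) : R :=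
  match @shift_idx d k m s, @shift_idx d k n t with
  | Some a, Some b => X q a b
  | _, _ => 0
  end.

Definition kernel (c' c k : nat) :=
  'I_c' -> 'I_c -> 'I_(2 * k + 1) -> 'I_(2 * k + 1) -> R.

Definition conv (c' c d k : nat) (K : kernel c' c k) (X : tensor c d) : tensor c' d :=
  fun p m n => \sum_(q < c) \sum_(s < 2 * k + 1) \sum_(t < 2 * k + 1)
                 K p q s t * padval X q m n s t.

Definition cnn_layer (c' c d k : nat) (K : kernel c' c k) (b : 'I_c' -> R)
    (X : tensor c d) : tensor c' d :=
  fun p m n => relu (conv K X p m n + b p).

Fixpoint cnn_eval (d k : nat) (c : nat -> nat)
    (K : forall j, kernel (c j.+1) (c j) k) (b : forall j, 'I_(c j.+1) -> R)
    (n : nat) (X : tensor (c 0%N) d) : tensor (c n) d :=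
  match n as n0 return tensor (c n0) d with
  | 0%N => X
  | n'.+1 => cnn_layer (K n') (b n') (@cnn_eval d k c K b n' X)
  end.

(* f : R^{d x d} -> R^{d x d} coincides on [0,1]^{d x d} with a member of
   C^{W,L}_{2k+1}(R^{1 x d x d}, R^{1 x d x d}): an L-layer ReLU CNN with
   channels c_0 = 1, ..., c_L = 1, width max{c_1..c_L} = W, kernel size 2k+1. *)
Definition CNN_class_on01 (k d W L : nat) (f : 'M[R]_d -> 'M[R]_d) : Prop :=
  exists (c : nat -> nat) (K : forall j, kernel (c j.+1) (c j) k)
         (b : forall j, 'I_(c j.+1) -> R),
    [/\ c 0%N = 1%N, c L = 1%N, (\max_(j < L) c j.+1)%N = W &
        forall X : 'M[R]_d, (forall m n, 0 <= X m n <= 1) ->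
          forall (p : 'I_(c L)) (m n : 'I_d),
            @cnn_eval d k c K b L (fun _ a b => X a b) p m n = f X m n].

End Defs.

(* Main.v *)
Require Import Defs.
From HB Require Import structures.
From mathcomp Require Import all_boot all_order all_algebra.
From mathcomp Require Import reals.
From mathcomp Require Import zify.
From mathcomp.algebra_tactics Require Import ring lra.
Import Order.TTheory GRing.Theory Num.Theory.
Local Open Scope ring_scope.
Set Implicit Arguments. Unset Strict Implicit.
Section Aux.
Variable R : realType.
Variable k : nat.

Lemma kc_lt : (k < 2 * k + 1)%N. Proof. lia. Qed.
Lemma km_lt : (k.-1 < 2 * k + 1)%N. Proof. lia. Qed.
Definition kc : 'I_(2*k+1) := Ordinal kc_lt.
Definition km : 'I_(2*k+1) := Ordinal km_lt.

Definition kfun (a b c : R) (s t : 'I_(2*k+1)) : R :=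
  (if (s == kc) && (t == kc) then a else 0) +
  (if (s == km) && (t == kc) then b else 0) +
  (if (s == kc) && (t == km) then c else 0).

Lemma pick2 (F : 'I_(2*k+1) -> 'I_(2*k+1) -> R) s0 t0 a :
  \sum_(s < 2*k+1) \sum_(t < 2*k+1) (if (s == s0) && (t == t0) then a else 0) * F s t
  = a * F s0 t0.
Proof.
rewrite (bigD1 s0) //= [X in _ + X]big1 => [|s /negbTE ->]; last first.
  by rewrite big1 // => t _; rewrite mul0r.
rewrite (bigD1 t0) //= !eqxx /= big1 ?addr0 // => t /negbTE ->.
by rewrite mul0r.
Qed.

Lemma conv3 c' c d (A B C : 'I_c' -> 'I_c -> R) (X : tensor R c d) p m n :
  conv (fun p q s t => kfun (A p q) (B p q) (C p q) s t) X p m n =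
  \sum_(q < c) (A p q * padval X q m n kc kc + B p q * padval X q m n km kc
                + C p q * padval X q m n kc km).
Proof.
apply: eq_bigr => q _.
under eq_bigr do under eq_bigr do rewrite /kfun !mulrDl.
under eq_bigr do rewrite !big_split /=.
by rewrite !big_split /= !pick2.
Qed.

Variable d : nat.
Lemma shift_c (m : 'I_d) : shift_idx m kc = Some m.
Proof. by rewrite /shift_idx /= leq_addl addnK valK. Qed.

Hypothesis hk : (0 < k)%N.

Lemma shift_up (m : 'I_d) :
  shift_idx m km = if (0 < m)%N then Some (insubd m m.-1) else None.
Proof.
rewrite /shift_idx /=.
case: (posnP m) => [->|hm]; first by rewrite add0n ifF //; lia.
rewrite ifT; last by lia.
have h : (m.-1 < d)%N by have := ltn_ord m; lia.
have -> : (m + k.-1 - k = m.-1)%N by lia.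
by rewrite /insubd (insubT (fun x => x < d)%N h).
Qed.

Lemma padval_c c (X : tensor R c d) q m n : padval X q m n kc kc = X q m n.
Proof. by rewrite /padval !shift_c. Qed.

Lemma padval_up c (X : tensor R c d) q m n :
  padval X q m n km kc = if (0 < m)%N then X q (insubd m m.-1) n else 0.
Proof. by rewrite /padval shift_up shift_c; case: ifP. Qed.

Lemma padval_left c (X : tensor R c d) q m n :
  padval X q m n kc km = if (0 < n)%N then X q m (insubd n n.-1) else 0.
Proof. by rewrite /padval shift_up shift_c; case: ifP => //; case: (shift_idx m kc). Qed.

End Aux.

Lemma sum_pick1 (R : realType) n a (F : 'I_n -> R) v :
  (forall q : 'I_n, nat_of_ord q = a -> F q = v) ->
  \sum_(q < n) (if nat_of_ord q == a then F q else 0) = if (a < n)%N then v else 0.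
Proof.
move=> H; case: ltnP => ha.
  rewrite (bigD1 (Ordinal ha)) //= eqxx H // big1 ?addr0 // => q hq.
  case: eqP => // e; case/negP: hq; apply/eqP/val_inj => /=; exact: e.
rewrite big1 // => q _; case: eqP => // e.
by have := ltn_ord q; rewrite e; lia.
Qed.

Lemma sum_pickm (R : realType) n a c (G : 'I_n -> R) v :
  (forall q : 'I_n, nat_of_ord q = a -> G q = v) ->
  \sum_(q < n) (if nat_of_ord q == a then c else 0) * G q = if (a < n)%N then c * v else 0.
Proof.
move=> H; rewrite -(sum_pick1 (F := fun q => c * G q)) => [|q /H ->] //.
by apply: eq_bigr => q _; case: ifP; rewrite ?mul0r.
Qed.

Lemma relu_id (R : realType) (x : R) : 0 <= x -> relu x = x.
Proof. by move=> h; rewrite /relu; apply/max_idPl. Qed.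
Lemma relu_neg (R : realType) (x : R) : x <= 0 -> relu x = 0.
Proof. by move=> h; rewrite /relu; apply/max_idPr. Qed.
Lemma relu_ge0 (R : realType) (x : R) : 0 <= relu x.
Proof. by rewrite /relu le_max lexx orbT. Qed.

Section Main.
Variable R : realType.
Variables (k d : nat) (l i : 'I_(d * d) -> nat).
Hypotheses (hk : (0 < k)%N) (hd : (0 < d)%N).
Variable L0 : nat.
Hypothesis hL0 : (d <= L0)%N.

Definition D := (d * d)%N.
Definition cm := if (1 < d)%N then 3%N else 1%N.
Definition cf (t : nat) : nat :=
  if t == 0%N then 1%N else if (t <= L0)%N then cm
  else if t == L0.+1 then (2 * D)%N else if t == L0.+2 then D else 1%N.
Definition m0 : 'I_d := Ordinal hd.
Definition lp (jj : nat) := l (mxvec_index (insubd m0 (jj %/ d)%N) (insubd m0 (jj %% d)%N)).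
Definition ip (jj : nat) := i (mxvec_index (insubd m0 (jj %/ d)%N) (insubd m0 (jj %% d)%N)).
Definition Cc (jj : nat) : R := 2%:R ^+ lp jj + (ip jj)%:R + 2%:R.
Definition off : nat := if (1 < d)%N then d.+1 else 0%N.
Definition sg (p : nat) : R := if (p < D)%N then 1 else -1.

Definition KA (j p q : nat) : R :=
  if (j < L0)%N then (if (p == 0%N) && (q == 0%N) then 1 else 0)
  else if j == L0 then sg p * (if q == 0%N then 2%:R ^+ lp (p %% D)%N
                               else if q == 1%N then Cc (p %% D)%N * d%:R
                               else if q == 2%N then Cc (p %% D)%N else 0)
  else if j == L0.+1 then (if q == p then -1 else 0) + (if q == (p + D)%N then -1 else 0)
  else if j == L0.+2 then 1 else 0.
Definition KB (j p q : nat) : R := if (j < L0)%N && (p == 1%N) && (q == 1%N) then 1 else 0.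
Definition KC (j p q : nat) : R := if (j < L0)%N && (p == 2%N) && (q == 2%N) then 1 else 0.
Definition bb (j p : nat) : R :=
  if (j < L0)%N then (if (p == 1%N) || (p == 2%N) then 1 else 0)
  else if j == L0 then sg p * (- (ip (p %% D)%N)%:R - Cc (p %% D)%N * (off + p %% D)%:R)
  else if j == L0.+1 then 1 else 0.

Definition Kn (j : nat) : kernel R (cf j.+1) (cf j) k :=
  fun p q s t => kfun (KA j p q) (KB j p q) (KC j p q) s t.
Definition bn (j : nat) : 'I_(cf j.+1) -> R := fun p => bb j p.

Definition ev (X : 'M[R]_d) t := @cnn_eval R d k cf Kn bn t (fun _ a b => X a b).
Arguments ev X t : clear implicits.
Arguments Kn j : clear implicits.
Arguments bn j : clear implicits.

Lemma ev_S X t p m n :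
  ev X t.+1 p m n = relu (conv (Kn t) (ev X t) p m n + bb t p).
Proof. by []. Qed.

Lemma cf_gt0 t : (0 < cf t)%N.
Proof. rewrite /cf /cm /D; repeat case: ifP => // *; nia. Qed.

Lemma cf_mid t : (0 < t <= L0)%N -> cf t = cm.
Proof. move=> /andP [h1 h2]; rewrite /cf h2; case: eqP => //; lia. Qed.

Lemma inv_counter (X : 'M[R]_d) (hX : forall m n, 0 <= X m n <= 1) t : (t <= L0)%N ->
  forall (p : 'I_(cf t)) m n, ev X t p m n =
    if nat_of_ord p == 0%N then X m n else if nat_of_ord p == 1%N then (minn m.+1 t)%:R
    else (minn n.+1 t)%:R.
Proof.
elim: t => [|t IH] ht p m n.
  have -> : nat_of_ord p = 0%N by have := ltn_ord p; rewrite /cf /=; lia.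
  by [].
have ht' : (t < L0)%N by lia.
have cft1 : cf t.+1 = cm by apply: cf_mid; lia.
have hp : (nat_of_ord p < cm)%N by rewrite -cft1; exact: ltn_ord.
rewrite ev_S /Kn conv3 /=.
under eq_bigr => q _ do rewrite /KA /KB /KC ht' /=.
rewrite /bb ht'.
have [p0|p0] := eqVneq (nat_of_ord p) 0%N.
  rewrite p0 /=.
  rewrite (eq_bigr (fun q : 'I_(cf t) => if nat_of_ord q == 0%N then X m n else 0)); last first.
    move=> q _; rewrite padval_c IH; last lia.
    by case: ifP => hq; rewrite ?hq ?mul1r ?mul0r ?addr0.
  rewrite (sum_pick1 (v := X m n)) // cf_gt0 addr0 relu_id //; by case/andP: (hX m n).
have [p1|p1] := eqVneq (nat_of_ord p) 1%N.
  rewrite p1 /=.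
  rewrite (eq_bigr (fun q : 'I_(cf t) => if nat_of_ord q == 1%N then
       (if (0 < m)%N then (minn m t)%:R else 0) else 0)); last first.
    move=> q _; rewrite padval_up // IH; last lia.
    case: eqP => [->|_] /=; rewrite ?mul1r !mul0r ?addr0 ?add0r //.
    case: ifP => hm //; rewrite val_insubd.
    have -> : (m.-1 < d)%N by have := ltn_ord m; lia.
    by rewrite prednK.
  rewrite (sum_pick1 (v := if (0 < m)%N then (minn m t)%:R else 0)) //.
  case: (posnP t) => [t0|tpos].
    subst t; rewrite /cf eqxx ltnn add0r relu_id //.
  rewrite cf_mid ?tpos //; last by lia.
  rewrite p1 in hp; rewrite hp.
  case: (posnP m) => [m0'|mpos].
    rewrite m0' /= add0r relu_id //.
    by rewrite (_ : minn 1 t.+1 = 1%N) //; lia.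
  rewrite natr1 relu_id ?ler0n //.
  by rewrite (_ : (minn m t).+1 = minn m.+1 t.+1) //; lia.
have [p2|p2] := eqVneq (nat_of_ord p) 2%N; last first.
  by exfalso; move: hp p0 p1 p2; rewrite /cm; case: ifP => _; lia.
rewrite /=.
rewrite (eq_bigr (fun q : 'I_(cf t) => if nat_of_ord q == 2%N then
     (if (0 < n)%N then (minn n t)%:R else 0) else 0)); last first.
  move=> q _; rewrite padval_left // IH; last lia.
  case: eqP => [->|_] /=; rewrite ?mul1r !mul0r ?addr0 ?add0r //.
  case: ifP => hn //; rewrite val_insubd.
  have -> : (n.-1 < d)%N by have := ltn_ord n; lia.
  by rewrite prednK //; apply/idP.
rewrite (sum_pick1 (v := if (0 < n)%N then (minn n t)%:R else 0)) //.
case: (posnP t) => [t0|tpos].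
  subst t; rewrite /cf eqxx /= add0r relu_id //.
rewrite cf_mid ?tpos //; last by lia.
rewrite p2 in hp; rewrite hp.
case: (posnP n) => [n0'|npos].
  rewrite n0' /= add0r relu_id //.
  by rewrite (_ : minn 1 t.+1 = 1%N) //; lia.
rewrite natr1 relu_id ?ler0n //.
by rewrite (_ : (minn n t).+1 = minn n.+1 t.+1) //; lia.
Qed.

Definition wv (jj : nat) (x : R) (ps : nat) : R :=
  2%:R ^+ lp jj * x - (ip jj)%:R + Cc jj * (ps%:R - jj%:R).

Lemma L0_gt0 : (0 < L0)%N. Proof. lia. Qed.

Lemma layer_w (X : 'M[R]_d) (hX : forall m n, 0 <= X m n <= 1)
  (p : 'I_(cf L0.+1)) m n :
  ev X L0.+1 p m n = relu (sg p * wv (p %% D)%N (X m n) (m * d + n)%N).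
Proof.
rewrite ev_S /Kn conv3 /=.
under eq_bigr => q _ do rewrite /KA /KB /KC ltnn eqxx /= !mul0r !addr0.
rewrite /bb ltnn eqxx.
set jj := (p %% D)%N.
rewrite (eq_bigr (fun q : 'I_(cf L0) =>
   (if nat_of_ord q == 0%N then sg p * (2%:R ^+ lp jj * X m n) else 0) +
   (if nat_of_ord q == 1%N then sg p * (Cc jj * d%:R * (m.+1)%:R) else 0) +
   (if nat_of_ord q == 2%N then sg p * (Cc jj * (n.+1)%:R) else 0))); last first.
  move=> q _; rewrite padval_c inv_counter //.
  have hm : minn m.+1 L0 = m.+1 by have := ltn_ord m; lia.
  have hn : minn n.+1 L0 = n.+1 by have := ltn_ord n; lia.
  rewrite hm hn.
  case: eqP => [->|q0] /=; first by ring.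
  case: eqP => [->|q1] /=; first by ring.
  case: eqP => [_|q2] /=; first by ring.
  by ring.
rewrite !big_split /=.
rewrite (sum_pick1 (v := sg p * (2%:R ^+ lp jj * X m n))) //.
rewrite (sum_pick1 (v := sg p * (Cc jj * d%:R * (m.+1)%:R))) //.
rewrite (sum_pick1 (v := sg p * (Cc jj * (n.+1)%:R))) //.
rewrite cf_mid; last by rewrite L0_gt0 leqnn.
rewrite /cm /off /wv; have [hd1|hd1] := ltnP 1 d.
  rewrite /=.
  congr relu; rewrite !natrD !natrM -!natr1; ring.
rewrite /=.
have d1 : d = 1%N by lia.
have m0' : nat_of_ord m = 0%N by have := ltn_ord m; lia.
have n0' : nat_of_ord n = 0%N by have := ltn_ord n; lia.
congr relu; rewrite m0' n0' /= !natrD natrM; ring.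
Qed.

Lemma hat_relu (w : R) : relu (- relu w + - relu (- w) + 1) = hat w.
Proof.
rewrite /hat; have [hw|hw] := lerP 0 w.
  rewrite ger0_norm // (relu_id hw) (@relu_neg _ (- w)); last by rewrite oppr_le0.
  case: ifP => h1; first by rewrite relu_id; lra.
  rewrite relu_neg //; move/negbT: h1; rewrite -ltNge; lra.
rewrite ltr0_norm // (relu_neg (ltW hw)) (@relu_id _ (- w)); last by rewrite oppr_ge0 ltW.
case: ifP => h1; first by rewrite relu_id; lra.
rewrite relu_neg //; move/negbT: h1; rewrite -ltNge; lra.
Qed.

Lemma hat_ge0 (w : R) : 0 <= hat w.
Proof. rewrite /hat; case: ifP => // h; lra. Qed.

Lemma layer_hat (X : 'M[R]_d) (hX : forall m n, 0 <= X m n <= 1)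
  (p : 'I_(cf L0.+2)) m n :
  ev X L0.+2 p m n = hat (wv p (X m n) (m * d + n)%N).
Proof.
have hc : cf L0.+2 = D.
  rewrite /cf /=.
  have -> : (L0.+1 < L0)%N = false by lia.
  have -> : (L0.+2 == L0.+1) = false by lia.
  by rewrite eqxx.
have hpD : (p < D)%N by rewrite -hc; exact: ltn_ord.
have h1 : (L0.+1 < L0)%N = false by lia.
have h2 : (L0.+1 == L0) = false by lia.
rewrite ev_S /Kn conv3 /=.
under eq_bigr => q _ do rewrite /KA /KB /KC h1 h2 eqxx /= !mul0r !addr0 padval_c layer_w // mulrDl.
rewrite /bb h1 h2 eqxx big_split /=.
rewrite (sum_pickm (-1) (v := relu (sg p * wv (p %% D)%N (X m n) (m * d + n)%N))); last first.
  by move=> q ->.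
rewrite (sum_pickm (-1) (v := relu (sg (p + D)%N * wv ((p + D) %% D)%N (X m n) (m * d + n)%N))); last first.
  by move=> q ->.
have c2 : cf L0.+1 = (2 * D)%N.
  rewrite /cf /=.
  have -> : (L0 < L0)%N = false by lia.
  by rewrite eqxx.
have hp1 : (p < cf L0.+1)%N by rewrite c2; lia.
have hp2 : (p + D < cf L0.+1)%N by rewrite c2; lia.
rewrite hp1 hp2 /sg hpD.
have -> : (p + D < D)%N = false by lia.
by rewrite modnDr modn_small // -hat_relu mul1r !mulN1r.
Qed.

Lemma hat_far (x : R) q ps : 0 <= x <= 1 -> q != ps -> hat (wv q x ps) = 0.
Proof.
move=> /andP [hx0 hx1] hq.
rewrite /wv /Cc.
set a : R := 2%:R ^+ lp q; set b : R := (ip q)%:R.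
have ha : 0 <= a by rewrite /a exprn_ge0 // ler0n.
have hb : 0 <= b by rewrite /b ler0n.
have hdel : 1 <= ps%:R - q%:R :> R \/ ps%:R - q%:R <= -1 :> R.
  case: (ltngtP q ps) => h.
  - left; rewrite -natrB; last exact: ltnW.
    by rewrite ler1n; lia.
  - right; rewrite -opprB -natrB; last exact: ltnW.
    by rewrite lerN2 ler1n; lia.
  - by rewrite h eqxx in hq.
rewrite /hat ifF //; apply/negbTE; rewrite -ltNge ltr_normr; apply/orP.
case: hdel => h; [left|right]; nra.
Qed.

Lemma layer_out (X : 'M[R]_d) (hX : forall m n, 0 <= X m n <= 1)
  (p : 'I_(cf L0.+3)) m n :
  ev X L0.+3 p m n = hat_li (l (mxvec_index m n)) (i (mxvec_index m n)) (X m n).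
Proof.
have hc : cf L0.+2 = D.
  rewrite /cf /=.
  have -> : (L0.+1 < L0)%N = false by lia.
  have -> : (L0.+2 == L0.+1) = false by lia.
  by rewrite eqxx.
have h1 : (L0.+2 < L0)%N = false by lia.
have h2 : (L0.+2 == L0) = false by lia.
have h3 : (L0.+2 == L0.+1) = false by lia.
rewrite ev_S /Kn conv3 /=.
under eq_bigr => q _ do rewrite /KA /KB /KC h1 h2 h3 eqxx /= !mul0r !addr0 mul1r padval_c layer_hat //.
rewrite /bb h1 h2 h3 addr0.
set ps := (m * d + n)%N.
rewrite (eq_bigr (fun q : 'I_(cf L0.+2) =>
   if nat_of_ord q == ps then hat (wv ps (X m n) ps) else 0)); last first.
  move=> q _; case: eqP => [->//|hq]; apply: hat_far => //; exact/eqP.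
rewrite (sum_pick1 (v := hat (wv ps (X m n) ps))) //.
have hps : (ps < cf L0.+2)%N.
  rewrite hc /ps /D; have := ltn_ord m; have := ltn_ord n; nia.
rewrite hps relu_id ?hat_ge0 //.
have em : insubd m0 (ps %/ d)%N = m.
  apply: val_inj; rewrite val_insubd /ps divnMDl // divn_small // addn0 ltn_ord.
  by [].
have en : insubd m0 (ps %% d)%N = n.
  apply: val_inj; rewrite val_insubd /ps modnMDl modn_small // ltn_ord.
  by [].
rewrite /wv /lp /ip /Cc em en subrr mulr0 addr0 /hat_li /hstep.
congr hat; field.
by apply: expf_neq0; rewrite pnatr_eq0.
Qed.

Lemma main_gen : CNN_class_on01 k (2 * D) L0.+3 (Phi (R := R) l i).
Proof.
exists cf, Kn, bn; split.
- by [].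
- rewrite /cf /=.
  have -> : (L0.+2 < L0)%N = false by lia.
  have -> : (L0.+3 == L0.+1) = false by lia.
  have -> : (L0.+3 == L0.+2) = false by lia.
  by [].
- have hD : (1 <= D)%N by rewrite /D; nia.
  have hcm : (cm <= 2 * D)%N by rewrite /cm /D; case: ifP => h; nia.
  apply/eqP; rewrite eqn_leq; apply/andP; split.
    apply/bigmax_leqP => j _.
    rewrite /cf; case: ifP => _; first lia.
    case: ifP => _; first done.
    case: ifP => _; lia.
  have h : (L0 < L0.+3)%N by lia.
  have := @leq_bigmax_cond _ (fun _ => true) (fun j : 'I_(L0.+3) => cf j.+1) (Ordinal h) isT.
  have c2 : cf L0.+1 = (2 * D)%N.
    rewrite /cf /=.
    have -> : (L0 < L0)%N = false by lia.
    by rewrite eqxx.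
  by rewrite /= c2.
- move=> X hX p m n; rewrite /Phi mxE; exact: layer_out.
Qed.
End Main.

Theorem lemmaC2 (R : realType) (k d : nat) (l i : 'I_(d * d) -> nat)
  (hk : (0 < k)%N) (hd : (0 < d)%N) (hi : in_Il l i) :
  CNN_class_on01 k (2 * (d * d)) ((5 * d) %/ 2 + 3) (Phi (R := R) l i).
Proof.
rewrite addn3; apply: main_gen => //.
by rewrite leq_divRL //; lia.
Qed.
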